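(* Consider the sampling-based safety filter described in the context, run in closed loop for $t=0,1,2,\dots$ with $\mathbf{x}_{t+1}=f(\mathbf{x}_t,\mathbf{u}^{\mathrm{safe}}_t)$ and arbitrary nominal inputs. Let $\mathcal{C}\subseteq\mathcal{X}$ be a safe control invariant set with a known invariance control law $\mathbf{u}^{\mathrm{inv}}:\mathcal{C}\to\mathcal{U}$ satisfying $f(\mathbf{x},\mathbf{u}^{\mathrm{inv}}(\mathbf{x}))\in\mathcal{C}$ for every $\mathbf{x}\in\mathcal{C}$. Suppose the sampling space is restricted to control sequences whose terminal state lies in $\mathcal{C}$, i.e., at every time $t$ every sampled sequence $U^i_{t+1}$, rolled out from $\mathbf{x}_{t+1}=f(\mathbf{x}_t,\mathbf{u}^{\mathrm{nom}}_t)$, has terminal state $\mathbf{x}^{U^i_{t+1}}_H\in\mathcal{C}$. If the filter does not intervene at $t=0$, i.e. $\mathbf{u}^{\mathrm{safe}}_0=\mathbf{u}^{\mathrm{nom}}_0$, then the filter guarantees safety at all timesteps $t\ge0$: for every $t\ge 0$ there exists a control sequence $U_{t+1}\in\mathcal{U}^H$ whose rollout from $\mathbf{x}_{t+1}=f(\mathbf{x}_t,\mathbf{u}^{\mathrm{safe}}_t)$ is safe.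
   Context: Consider a deterministic discrete-time system $\mathbf{x}_{t+1}=f(\mathbf{x}_t,\mathbf{u}_t)$ with states $\mathbf{x}_t\in\mathcal{X}$ and inputs $\mathbf{u}_t\in\mathcal{U}$. Let $l:\mathcal{X}\to\mathbb{R}$ be a level function and $\mathcal{L}=\{\mathbf{x}: l(\mathbf{x})\le 0\}$ the failure set. Fix a horizon $H\ge1$. For a state $\mathbf{x}$ and $U=(\mathbf{u}_0,\dots,\mathbf{u}_{H-1})\in\mathcal{U}^H$, the rollout is $\mathbf{x}^U_0=\mathbf{x}$, $\mathbf{x}^U_{k+1}=f(\mathbf{x}^U_k,\mathbf{u}_k)$, with terminal state $\mathbf{x}^U_H$; the trajectory is safe ($\mathcal{O}_\tau=1$) if $\mathbf{x}^U_k\notin\mathcal{L}$ for all $k\in\{0,\dots,H\}$, and its cost is $C(\tau)=\max_{k\in\{0,\dots,H\}}\{-l(\mathbf{x}^U_k)\}$ (so $C(\tau)<0$ iff the trajectory is safe). A set $\mathcal{C}\subseteq\mathcal{X}$ is a safe control invariant set if $\mathcal{C}\cap\mathcal{L}=\emptyset$ and for every $\mathbf{x}\in\mathcal{C}$ there is $\mathbf{u}^{\mathrm{inv}}(\mathbf{x})\in\mathcal{U}$ with $f(\mathbf{x},\mathbf{u}^{\mathrm{inv}}(\mathbf{x}))\in\mathcal{C}$. Safety filter at time $t$: inputs are the current state $\mathbf{x}_t$, a nominal input $\mathbf{u}^{\mathrm{nom}}_t\in\mathcal{U}$ and a stored sequence $U^{\mathrm{safe}}_t=(\bar{\mathbf{u}}_t,\dots,\bar{\mathbf{u}}_{t+H-1})$.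 It computes $\mathbf{x}^{\mathrm{pred}}=f(\mathbf{x}_t,\mathbf{u}^{\mathrm{nom}}_t)$, draws $N$ sequences $U^1_{t+1},\dots,U^N_{t+1}$ from a sampling distribution $\tilde q_{t+1}$ on $\mathcal{U}^H$, rolls each out from $\mathbf{x}^{\mathrm{pred}}$, and lets $i^*$ minimize the cost. If the minimum cost is negative (the filter does not intervene; written $\mathbf{u}^{\mathrm{safe}}_t=\mathbf{u}^{\mathrm{nom}}_t$), it outputs $\mathbf{u}^{\mathrm{safe}}_t=\mathbf{u}^{\mathrm{nom}}_t$ and stores $U^{\mathrm{safe}}_{t+1}=U^{i^*}_{t+1}$. Otherwise (the filter intervenes), it outputs $\mathbf{u}^{\mathrm{safe}}_t=\bar{\mathbf{u}}_t$ and stores the shifted sequence $U^{\mathrm{safe}}_{t+1}=(\bar{\mathbf{u}}_{t+1},\dots,\bar{\mathbf{u}}_{t+H-1},\mathbf{u}^{\mathrm{inv}}(\bar{\mathbf{x}}))$, where $\bar{\mathbf{x}}$ is the terminal state of the rollout of $U^{\mathrm{safe}}_t$ from $\mathbf{x}_t$, i.e., the appended last input keeps the system inside $\mathcal{C}$. The closed-loop system applies $\mathbf{u}^{\mathrm{safe}}_t$. *)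

(* Defs.v *)
From mathcomp Require Import all_boot all_order all_algebra.
From mathcomp Require Import reals.
From Stdlib Require List.
Set Implicit Arguments. Unset Strict Implicit. Unset Printing Implicit Defensive.
Import Order.TTheory GRing.Theory Num.Theory.
Local Open Scope ring_scope.

Section Defs.
Variables (R : realType) (X U : Type).
Variable (f : X -> U -> X) (l : X -> R).

Definition failure_set (x : X) : Prop := l x <= 0.

Definition rollout_tail (x : X) (s : seq U) : seq X := scanl f x s.
Definition rollout (x : X) (s : seq U) : seq X := x :: rollout_tail x s.
Definition terminal (x : X) (s : seq U) : X := last x (rollout_tail x s).

Definition traj_safe (x : X) (s : seq U) : Prop :=
  forall y, List.In y (rollout x s) -> ~ failure_set y.

Definition cost (x : X) (s : seq U) : R :=
  foldr Num.max (- l x) [seq - l y | y <- rollout_tail x s].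

Definition safe_control_invariant (C : X -> Prop) (uinv : X -> U) : Prop :=
  (forall x, C x -> ~ failure_set x) /\ (forall x, C x -> C (f x (uinv x))).

(* One step of the safety filter, as a relation (ties in the argmin are
   resolved arbitrarily).  Inputs: current state x, nominal input unom,
   stored sequence Us, samples (the N drawn sequences).  Outputs: the
   flag [interv] (true iff the filter intervenes), the applied input
   [usafe], and the new stored sequence [Us']. *)
Definition filter_step (uinv : X -> U) (x : X) (unom : U) (Us : seq U)
    (samples : seq (seq U)) (interv : bool) (usafe : U) (Us' : seq U) : Prop :=
  let xpred := f x unom in
  exists2 istar, List.In istar samples &
    (forall j, List.In j samples -> cost xpred istar <= cost xpred j) /\
    ((cost xpred istar < 0 /\ interv = false /\ usafe = unom /\ Us' = istar) \/
     (~ (cost xpred istar < 0) /\ interv = true /\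
      (exists ubar rest, Us = ubar :: rest /\ usafe = ubar /\
         Us' = rcons rest (uinv (terminal x Us))))).

End Defs.

(* Main.v *)
Require Import Defs.
From mathcomp Require Import all_boot all_order all_algebra.
From mathcomp Require Import reals.
From Stdlib Require List.
Import Order.TTheory GRing.Theory Num.Theory.
Local Open Scope ring_scope.

Lemma foldr_max_neg (R : realType) (s : seq R) (a : R) :
  foldr Num.max a s < 0 -> a < 0 /\ (forall y, List.In y s -> y < 0).
Proof.
elim: s => [|b s IH] /=; first by move=> h; split=> // y [].
rewrite gt_max => /andP[hb /IH [ha hs]]; split=> // y [<-|/hs] //.
Qed.

Lemma cost_safe (R : realType) (X U : Type) (f : X -> U -> X) (l : X -> R) x s :
  cost f l x s < 0 -> traj_safe f l x s.
Proof.
rewrite /cost => /foldr_max_neg [ha hs] y /= hy; rewrite /failure_set; apply/negP; rewrite -ltNge.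
case: hy => [<-|hy]; first by rewrite -oppr_lt0.
by rewrite -oppr_lt0; apply: (hs (- l y)); exact: (List.in_map (fun z => - l z) _ _ hy).
Qed.

Lemma scanl_rcons (X U : Type) (f : X -> U -> X) x s u :
  scanl f x (rcons s u) = rcons (scanl f x s) (f (last x (scanl f x s)) u).
Proof. by elim: s x => [|a s IH] x //=; rewrite IH. Qed.

Theorem proposition2 (R : realType) (X U : Type) (f : X -> U -> X) (l : X -> R)
  (H : nat) (C : X -> Prop) (uinv : X -> U)
  (x : nat -> X) (unom : nat -> U) (usafe : nat -> U) (Us : nat -> seq U)
  (samples : nat -> seq (seq U)) (interv : nat -> bool) :
  (0 < H)%N ->
  safe_control_invariant f l C uinv ->
  size (Us 0%N) = H ->
  (* at each time: N >= 1 samples, each in U^H, each with terminal state in C *)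
  (forall t, samples t <> [::]) ->
  (forall t s, List.In s (samples t) -> size s = H) ->
  (forall t s, List.In s (samples t) -> C (terminal f (f (x t) (unom t)) s)) ->
  (* closed loop *)
  (forall t, filter_step f l uinv (x t) (unom t) (Us t) (samples t)
                 (interv t) (usafe t) (Us t.+1)) ->
  (forall t, x t.+1 = f (x t) (usafe t)) ->
  (* the filter does not intervene at t = 0 *)
  interv 0%N = false ->
  forall t, exists Ut : seq U, size Ut = H /\ traj_safe f l (x t.+1) Ut.
Proof.
move=> H0 [CS Cinv] _ _ Hsz HC Hstep Hx Hi0.
have inv : forall t, [/\ size (Us t.+1) = H, traj_safe f l (x t.+1) (Us t.+1)
                      & C (terminal f (x t.+1) (Us t.+1))].
  have nonint : forall t, cost f l (f (x t) (unom t)) (Us t.+1) < 0 ->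
      usafe t = unom t -> List.In (Us t.+1) (samples t) ->
      [/\ size (Us t.+1) = H, traj_safe f l (x t.+1) (Us t.+1)
                      & C (terminal f (x t.+1) (Us t.+1))].
    move=> t hc hu hin; rewrite Hx hu; split.
    - exact: Hsz hin.
    - exact: cost_safe.
    - exact: HC hin.
  elim=> [|t [IHs IHsafe IHC]].
    have [istar hin [_ [[hc [_ [hu hU]]]|[_ [hI _]]]]] := Hstep 0%N.
      by subst; apply: nonint.
    by rewrite Hi0 in hI.
  have [istar hin [_ [[hc [_ [hu hU]]]|[_ [_ [ubar [rest [hUs [hu hU]]]]]]]]] := Hstep t.+1.
    by subst; apply: nonint.
  rewrite hU (Hx t.+1) hu; rewrite hUs in IHs IHsafe IHC *.
  set term := terminal f (x t.+1) (ubar :: rest).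
  have hr : rollout f (f (x t.+1) ubar) (rcons rest (uinv term)) =
            rcons (rollout_tail f (x t.+1) (ubar :: rest)) (f term (uinv term)).
    by rewrite /rollout /rollout_tail /= scanl_rcons.
  split.
  - by rewrite size_rcons; move: IHs => /= ->.
  - move=> y; rewrite hr -cats1 => hy; case: (@List.in_app_or _ (rollout_tail f (x t.+1) (ubar :: rest)) [:: f term (uinv term)] y hy) => [hy1|[<-|[]]].
      by apply: IHsafe; right.
    by apply: CS; apply: Cinv.
  - rewrite /terminal /rollout_tail scanl_rcons last_rcons.
    exact: Cinv.
move=> t; exists (Us t.+1); by case: (inv t).
Qed.
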